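(* Let $E$ be a pseudo effect algebra satisfying (RDP) and let $d:E\to\mathbb R$ be a subadditive mapping. Assume that for every $x\in E$ the set $$D(x):=\{d(x_1)+\cdots+d(x_n):\ x=x_1+\cdots+x_n,\ x_1,\ldots,x_n\in E,\ n\ge 1\}$$ is bounded above in $\mathbb R$. Then the mapping $m:E\to\mathbb R$ given by $m(x)=\sup D(x)$ is a signed measure on $E$.
   Context: A pseudo effect algebra is a partial algebra $(E;+,0,1)$ with a partial binary operation $+$ such that for all $a,b,c\in E$: (i) $a+b$ and $(a+b)+c$ exist iff $b+c$ and $a+(b+c)$ exist, and then $(a+b)+c=a+(b+c)$; (ii) there is exactly one $d$ and exactly one $e$ with $a+d=e+a=1$; (iii) if $a+b$ exists, there are $d,e\in E$ with $a+b=d+a=b+e$; (iv) if $1+a$ or $a+1$ exists then $a=0$. The order is $a\le b$ iff $a+c=b$ for some $c$. $E$ satisfies the Riesz Decomposition Property (RDP) if whenever $a_1+a_2=b_1+b_2$ there are $d_1,d_2,d_3,d_4\in E$ with $d_1+d_2=a_1$, $d_3+d_4=a_2$, $d_1+d_3=b_1$, $d_2+d_4=b_2$. A mapping $d:E\to\mathbb R$ is subadditive if $d(0)=0$ and $d(x+y)\le d(x)+d(y)$ whenever $x+y$ is defined. A signed measure on $E$ is a map $m:E\to\mathbb R$ with $m(a+b)=m(a)+m(b)$ whenever $a+b$ is defined. *)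

(* Defs.v *)
From Stdlib Require Import Reals List.
Open Scope R_scope.

(* Partial binary operation encoded as pl : E -> E -> option E;
   pl a b = Some s means "a + b is defined and equals s". *)
Definition obind {E : Type} (f : E -> option E) (o : option E) : option E :=
  match o with Some x => f x | None => None end.

Definition is_PEA {E : Type} (pl : E -> E -> option E) (zero one : E) : Prop :=
  (* (i): (a+b)+c defined iff a+(b+c) defined, and then they are equal *)
  (forall a b c : E,
      obind (fun ab => pl ab c) (pl a b) = obind (fun bc => pl a bc) (pl b c)) /\
  (forall a : E, (exists! d, pl a d = Some one) /\ (exists! e, pl e a = Some one)) /\
  (forall a b s : E, pl a b = Some s ->
      exists d e, pl d a = Some s /\ pl b e = Some s) /\
  (forall a : E, ((exists s, pl one a = Some s) \/ (exists s, pl a one = Some s)) ->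
      a = zero).

Definition RDP {E : Type} (pl : E -> E -> option E) : Prop :=
  forall a1 a2 b1 b2 s : E, pl a1 a2 = Some s -> pl b1 b2 = Some s ->
    exists d1 d2 d3 d4 : E,
      pl d1 d2 = Some a1 /\ pl d3 d4 = Some a2 /\
      pl d1 d3 = Some b1 /\ pl d2 d4 = Some b2.

Definition subadditive {E : Type} (pl : E -> E -> option E) (zero : E) (d : E -> R) : Prop :=
  d zero = 0 /\ forall x y s : E, pl x y = Some s -> d s <= d x + d y.

Definition signed_measure {E : Type} (pl : E -> E -> option E) (m : E -> R) : Prop :=
  forall a b s : E, pl a b = Some s -> m s = m a + m b.

(* n-ary sum x1 + (x2 + (... + xn)) of the nonempty list x1 :: l (n >= 1) *)
Fixpoint psum {E : Type} (pl : E -> E -> option E) (x1 : E) (l : list E) : option E :=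
  match l with
  | nil => Some x1
  | y :: l' => obind (fun s => pl x1 s) (psum pl y l')
  end.

Definition Dset {E : Type} (pl : E -> E -> option E) (d : E -> R) (x : E) : R -> Prop :=
  fun r => exists (x1 : E) (l : list E),
    psum pl x1 l = Some x /\ r = d x1 + fold_right Rplus 0 (map d l).

(* Main.v *)
Require Import Defs.
From Stdlib Require Import Reals List Lra.
Open Scope R_scope.

Lemma sum_app (E : Type) (d : E -> R) (la lb : list E) :
  fold_right Rplus 0 (map d (la ++ lb)) =
  fold_right Rplus 0 (map d la) + fold_right Rplus 0 (map d lb).
Proof. induction la; simpl; [lra | rewrite IHla; lra]. Qed.

Lemma psum_assoc (E : Type) (pl : E -> E -> option E)
  (HA : forall a b c : E,
      obind (fun ab => pl ab c) (pl a b) = obind (fun bc => pl a bc) (pl b c)) :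
  forall la a1 a b1 lb b s, psum pl a1 la = Some a -> psum pl b1 lb = Some b ->
   pl a b = Some s -> psum pl a1 (la ++ b1 :: lb) = Some s.
Proof.
  induction la as [|y la' IH]; intros a1 a b1 lb b s Ha Hb Hs.
  - simpl in Ha. inversion Ha; subst. simpl. rewrite Hb. simpl. exact Hs.
  - simpl in Ha. destruct (psum pl y la') as [t|] eqn:Ht; simpl in Ha; [|discriminate].
    pose proof (HA a1 t b) as H. rewrite Ha in H. simpl in H. rewrite Hs in H.
    destruct (pl t b) as [u|] eqn:Hu; simpl in H; [|discriminate].
    simpl. rewrite (IH y t b1 lb b u Ht Hb Hu). simpl. auto.
Qed.

Lemma gen_rdp (E : Type) (pl : E -> E -> option E) (zero : E) (d : E -> R)
  (HR : RDP pl) (Hd : subadditive pl zero d) :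
  forall l x1 a b s, psum pl x1 l = Some s -> pl a b = Some s ->
  exists a1 la b1 lb, psum pl a1 la = Some a /\ psum pl b1 lb = Some b /\
   d x1 + fold_right Rplus 0 (map d l) <=
   (d a1 + fold_right Rplus 0 (map d la)) + (d b1 + fold_right Rplus 0 (map d lb)).
Proof.
  destruct Hd as [_ Hd].
  induction l as [|y l' IH]; intros x1 a b s Hx Hab.
  - simpl in Hx. inversion Hx; subst.
    exists a, nil, b, nil. simpl. repeat split; auto.
    pose proof (Hd _ _ _ Hab). lra.
  - simpl in Hx. destruct (psum pl y l') as [t|] eqn:Ht; simpl in Hx; [|discriminate].
    destruct (HR a b x1 t s Hab Hx) as (d1 & d2 & d3 & d4 & H12 & H34 & H13 & H24).
    destruct (IH y d2 d4 t Ht H24) as (a1 & la & b1 & lb & Pa & Pb & Ineq).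
    exists d1, (a1 :: la), d3, (b1 :: lb). simpl. rewrite Pa, Pb. simpl.
    repeat split; auto.
    pose proof (Hd _ _ _ H13). lra.
Qed.

Theorem proposition3p1 (E : Type) (pl : E -> E -> option E) (zero one : E)
  (d : E -> R) (m : E -> R) :
  is_PEA pl zero one ->
  RDP pl ->
  subadditive pl zero d ->
  (forall x : E, bound (Dset pl d x)) ->
  (forall x : E, is_lub (Dset pl d x) (m x)) ->
  signed_measure pl m.
Proof.
  intros HP HR Hd _ Hl a b s Hs.
  destruct HP as [HA _].
  apply Rle_antisym.
  - destruct (Hl s) as [_ Hmin]. apply Hmin. intros r (x1 & l & Hx & ->).
    destruct (gen_rdp E pl zero d HR Hd l x1 a b s Hx Hs) as (a1 & la & b1 & lb & Pa & Pb & Ineq).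
    destruct (Hl a) as [Ua _]. destruct (Hl b) as [Ub _].
    assert (Ra := Ua _ (ex_intro _ a1 (ex_intro _ la (conj Pa eq_refl)))).
    assert (Rb := Ub _ (ex_intro _ b1 (ex_intro _ lb (conj Pb eq_refl)))).
    lra.
  - assert (Key : forall ra rb, Dset pl d a ra -> Dset pl d b rb -> ra + rb <= m s).
    { intros ra rb (a1 & la & Pa & ->) (b1 & lb & Pb & ->).
      destruct (Hl s) as [Us _]. 
      replace (d a1 + fold_right Rplus 0 (map d la) + (d b1 + fold_right Rplus 0 (map d lb)))
        with (d a1 + fold_right Rplus 0 (map d (la ++ b1 :: lb))).
      + apply Us. exists a1, (la ++ b1 :: lb). split; auto.
        eapply psum_assoc; eauto.
      + rewrite sum_app. simpl. lra. }
    assert (Hb : forall rb, Dset pl d b rb -> rb <= m s - m a).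
    { intros rb Hrb. destruct (Hl a) as [_ Ma].
      assert (m a <= m s - rb). { apply Ma. intros ra Hra. pose proof (Key ra rb Hra Hrb). lra. }
      lra. }
    destruct (Hl b) as [_ Mb]. pose proof (Mb _ Hb). lra.
Qed.
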